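(* Let $W$ be a complex reflection group and $g\in W$. Suppose that the factors of some reduced reflection factorization $g=t_1\cdots t_k$ form a good generating set for some parabolic subgroup $W_X$ (that is, $\langle t_1,\dots,t_k\rangle=W_X$ and $k=\operatorname{rank}(W_X)$). Then $X=V^g$, $W_X$ is the parabolic closure $W_g$ of $g$, and $\ell_R(g)=\operatorname{codim}(V^g)$.
   Context: A complex reflection group is a finite subgroup of $\mathrm{GL}(V)$, $V$ a finite-dimensional Hermitian space, generated by unitary reflections (unitary maps whose fixed space is a hyperplane). The rank of a reflection group $G$ is $\operatorname{codim}(V^G)$ where $V^G$ is its fixed space. $\ell_R(g)$ is the minimum number of reflections whose product is $g$; a factorization achieving it is reduced. A parabolic subgroup is the pointwise stabilizer of a subset of $V$; $W_X$ denotes the pointwise stabilizer of the flat $X$ (intersection of reflection hyperplanes), and $\operatorname{rank}(W_X)=\operatorname{codim}(X)$. The parabolic closure $W_g$ is the intersection of all parabolic subgroups containing $g$; it equals $W_{V^g}$. *)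

(* Defs.v *)
(* A complex reflection group is modelled as a finite group
   G (in a finGroupType gT) together with a FAITHFUL matrix representation
   rG : G -> GL_n(algC) acting on row vectors V = 'rV[algC]_n, equipped with
   the standard Hermitian form.  Subspaces of V are row spaces of matrices. *)
From HB Require Import structures.
From mathcomp Require Import all_boot all_order all_algebra all_fingroup all_field all_character.
Set Implicit Arguments. Unset Strict Implicit. Unset Printing Implicit Defensive.
Import GRing.Theory Num.Theory.
Local Open Scope ring_scope.

Definition unitary n (A : 'M[algC]_n) : bool :=
  A *m (map_mx (fun z : algC => z^*) A)^T == 1%:M.

Definition fixmx n (A : 'M[algC]_n) : 'M[algC]_n := kermx (A - 1%:M).

Definition is_reflection n (A : 'M[algC]_n) : bool :=
  unitary A && ((\rank (fixmx A)).+1 == n).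

Section Defs.
Variables (gT : finGroupType) (G : {group gT}) (n : nat)
          (rG : mx_representation algC G n).

Definition reflections : {set gT} := [set t in G | is_reflection (rG t)].

Definition refl_group : Prop :=
  mx_faithful rG /\ G :=: <<reflections>>%g.

Definition fixG (H : {set gT}) : 'M[algC]_n := (\bigcap_(w in H) fixmx (rG w))%MS.

Definition grank (H : {set gT}) : nat := (n - \rank (fixG H))%N.

Definition flat (X : 'M[algC]_n) : Prop :=
  exists T : {set gT}, T \subset reflections /\
    (X == \bigcap_(t in T) fixmx (rG t))%MS.

Definition stab (X : 'M[algC]_n) : {set gT} :=
  [set w in G | (X <= fixmx (rG w))%MS].

Definition parabolic (P : {set gT}) : Prop :=
  exists A : 'rV[algC]_n -> Prop, forall w : gT,
    w \in P <-> (w \in G /\ forall v, A v -> v *m rG w = v).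

Definition parabolic_closure (g : gT) (H : {set gT}) : Prop :=
  forall w : gT, w \in H <-> (forall P, parabolic P -> g \in P -> w \in P).

Definition refl_factorization (g : gT) (ts : seq gT) : bool :=
  all (fun t => t \in reflections) ts && (g == \prod_(t <- ts) t)%g.

Definition is_refl_length (g : gT) (k : nat) : Prop :=
  (exists ts, refl_factorization g ts /\ size ts = k) /\
  (forall ts, refl_factorization g ts -> (k <= size ts)%N).

Definition reduced_factorization (g : gT) (ts : seq gT) : Prop :=
  refl_factorization g ts /\ is_refl_length g (size ts).

End Defs.

(* Main.v *)
Require Import Defs.
From HB Require Import structures.
From mathcomp Require Import all_boot all_order all_algebra all_fingroup all_field all_character.
From mathcomp Require Import zify.
Import GRing.Theory Num.Theory.
Local Open Scope ring_scope.
Set Implicit Arguments. Unset Strict Implicit.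

Lemma rank_ct0 n (A : 'M[algC]_n) : \rank (map_mx (fun z : algC => z^*) A)^T = \rank A.
Proof. by rewrite mxrank_tr (mxrank_map Num.conj_op). Qed.

Definition lprod n (Ms : seq 'M[algC]_n) := foldr (fun M P => M *m P) 1%:M Ms.
Definition lsum n (Ms : seq 'M[algC]_n) :=
  foldr (fun M S => ((M - 1%:M) + S)%MS) (0 : 'M[algC]_n) Ms.
Definition lcap n (Ms : seq 'M[algC]_n) :=
  foldr (fun M K => (fixmx M :&: K)%MS) (1%:M : 'M[algC]_n) Ms.

Lemma tel n m (u : 'M[algC]_(m, n)) Ms : (u *m lprod Ms - u <= lsum Ms)%MS.
Proof.
elim: Ms u => [|M Ms IH] u /=; first by rewrite mulmx1 subrr sub0mx.
have -> : u *m (M *m lprod Ms) - u = ((u *m M) *m lprod Ms - u *m M) + u *m (M - 1%:M).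
  by rewrite mulmxBr mulmx1 mulmxA addrA subrK.
apply: addmx_sub; first by apply: submx_trans (IH _) (addsmxSr _ _).
by apply: submx_trans (submxMl _ _) (addsmxSl _ _).
Qed.

Lemma rank_lsum n (Ms : seq 'M[algC]_n) :
  all (fun M => (\rank (M - 1%:M)%R <= 1)%N) Ms -> (\rank (lsum Ms) <= size Ms)%N.
Proof.
elim: Ms => [|M Ms IH] /=; first by rewrite mxrank0.
move=> /andP[h1 h2]; have := IH h2.
have := mxrank_adds_leqif (M - 1%:M) (lsum Ms); case=> le _.
move=> h; apply: leq_trans le _; rewrite -add1n; exact: leq_add.
Qed.

Lemma natl1 s c a b : (s.+1 + c = a + b -> a <= 1 -> b <= s -> c = 0)%N.
Proof. lia. Qed.
Lemma natl2 s a b : (s.+1 <= a + b -> a <= 1 -> b <= s -> b = s)%N.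
Proof. lia. Qed.

Lemma natl3 n a b : (n - a <= b -> a <= n -> n - b <= a)%N.
Proof. lia. Qed.

Lemma main_list n m (v : 'M[algC]_(m, n)) (Ms : seq 'M[algC]_n) :
  all (fun M => (\rank (M - 1%:M)%R <= 1)%N) Ms ->
  \rank (lsum Ms) = size Ms ->
  v *m lprod Ms = v -> forall M, M \in Ms -> v *m (M - 1%:M) = 0.
Proof.
elim: Ms v => [|M Ms IH] v //= /andP[h1 h2] hr hv.
have hle := rank_lsum h2.
have hsc := mxrank_sum_cap (M - 1%:M) (lsum Ms).
have hcap : ((M - 1%:M)%R :&: lsum Ms)%MS = 0.
  apply/eqP; rewrite -mxrank_eq0; apply/eqP. rewrite hr in hsc; exact: (natl1 hsc h1 hle).
have hrs : \rank (lsum Ms) = size Ms.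
  have := mxrank_adds_leqif (M - 1%:M) (lsum Ms); case=> le _.
  rewrite hr in le; exact: (natl2 le h1 hle).
have w0 : v *m (M - 1%:M) = 0.
  apply/eqP; rewrite -submx0 -hcap sub_capmx submxMl /=.
  have := tel (v *m M) Ms. rewrite -mulmxA hv.
  have -> : v - v *m M = - (v *m (M - 1%:M)) by rewrite mulmxBr mulmx1 opprB.
  by rewrite eqmx_opp.
have vM : v *m M = v by move: w0; rewrite mulmxBr mulmx1 => /eqP; rewrite subr_eq0 => /eqP.
move=> M'; rewrite inE => /orP[/eqP->//|]; apply: IH => //.
by rewrite -{2}hv mulmxA vM.
Qed.

Definition ct n m (A : 'M[algC]_(m, n)) := (map_mx (fun z : algC => z^*) A)^T.

Lemma ctM m n p (A : 'M[algC]_(m, n)) (B : 'M[algC]_(n, p)) : ct (A *m B) = ct B *m ct A.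
Proof. by rewrite /ct (map_mxM Num.conj_op) trmx_mul. Qed.

Lemma ctB1 n (A : 'M[algC]_n) : ct (A - 1%:M) = ct A - 1%:M.
Proof. by rewrite /ct (map_mxB Num.conj_op) (map_mx1 Num.conj_op) linearB /= trmx1. Qed.

Lemma mem_lsum n (Ms : seq 'M[algC]_n) M : M \in Ms -> (M - 1%:M <= lsum Ms)%MS.
Proof.
elim: Ms => [|N Ms IH] //=; rewrite inE => /orP[/eqP->|h]; first exact: addsmxSl.
exact: submx_trans (IH h) (addsmxSr _ _).
Qed.

Lemma sub_lcap n m (Y : 'M[algC]_(m, n)) (Ms : seq 'M[algC]_n) :
  (forall M, M \in Ms -> (Y <= fixmx M)%MS) -> (Y <= lcap Ms)%MS.
Proof.
elim: Ms => [|N Ms IH] /= key; first exact: submx1.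
rewrite sub_capmx key ?inE ?eqxx //= IH // => M hM; apply: key; by rewrite inE hM orbT.
Qed.

Lemma lcap_sub n (Ms : seq 'M[algC]_n) M : M \in Ms -> (lcap Ms <= fixmx M)%MS.
Proof.
elim: Ms => [|N Ms IH] //=; rewrite inE => /orP[/eqP->|h]; first exact: capmxSl.
exact: submx_trans (capmxSr _ _) (IH h).
Qed.

Lemma ker_lcap n (Ms : seq 'M[algC]_n) :
  all (@unitary n) Ms -> (kermx (ct (lsum Ms)) <= lcap Ms)%MS.
Proof.
move=> hu.
have key : forall M, M \in Ms -> (kermx (ct (lsum Ms)) <= fixmx M)%MS.
  move=> M hM; have /allP/(_ M hM)/eqP hU := hu.
  have hU' := mulmx1C hU.
  have /submxP[D hD] := mem_lsum hM.
  set Z := kermx _.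
  have Z0 : Z *m ct (M - 1%:M) = 0 by rewrite hD ctM mulmxA mulmx_ker mul0mx.
  have ZM : Z *m ct M = Z.
    by move: Z0; rewrite ctB1 mulmxBr mulmx1 => /eqP; rewrite subr_eq0 => /eqP.
  rewrite /fixmx sub_kermx mulmxBr mulmx1 -{1}ZM -mulmxA.
  by rewrite /ct in hU' *; rewrite hU' mulmx1 subrr.
exact: sub_lcap.
Qed.

Lemma rank_ct n m (A : 'M[algC]_(m, n)) : \rank (ct A) = \rank A.
Proof. by rewrite /ct mxrank_tr (mxrank_map Num.conj_op). Qed.

Lemma rank_lsum_ge n (Ms : seq 'M[algC]_n) :
  all (@unitary n) Ms -> (n - \rank (lcap Ms) <= \rank (lsum Ms))%N.
Proof.
move=> hu; have := mxrankS (ker_lcap hu); rewrite mxrank_ker rank_ct.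
move=> h; have := rank_leq_col (lsum Ms); exact: natl3 h.
Qed.


Lemma natl4 n r : ((n - r).+1 = n -> r <= n -> r <= 1)%N.
Proof. lia. Qed.

Lemma natl5 n k a : (k <= n -> n - (n - k) <= a -> a <= k -> a = k)%N.
Proof. lia. Qed.

Lemma fixP n m (v : 'M[algC]_(m, n)) (A : 'M[algC]_n) :
  (v <= fixmx A)%MS = (v *m A == v).
Proof. by rewrite /fixmx sub_kermx mulmxBr mulmx1 subr_eq0. Qed.

Lemma rG_prod (gT : finGroupType) (G : {group gT}) n (rG : mx_representation algC G n)
  (ts : seq gT) : all (fun t => t \in G) ts ->
  rG (\prod_(t <- ts) t)%g = lprod (map rG ts).
Proof.
elim: ts => [|t ts IH] /=; first by rewrite big_nil repr_mx1.
move=> /andP[ht hs].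
have hp : (\prod_(t <- ts) t)%g \in G.
  by rewrite big_seq; apply: group_prod => i; exact: (allP hs).
by rewrite big_cons repr_mxM // IH.
Qed.

Theorem mainTheorem4 (gT : finGroupType) (G : {group gT}) (n : nat)
    (rG : mx_representation algC G n) (g : gT) (ts : seq gT)
    (X : 'M[algC]_n) :
  refl_group rG -> g \in G ->
  reduced_factorization rG g ts ->
  flat rG X ->
  <<[set:: ts]>>%g = stab rG X ->
  size ts = grank rG (stab rG X) ->
  (X == fixmx (rG g))%MS /\
  parabolic_closure rG g (stab rG X) /\
  is_refl_length rG g (n - \rank (fixmx (rG g)))%N.
Proof.
move=> hrg hgG [hfac hlen] [T [hT hX]] hgen hsize.
move: (hfac) => /andP[/allP hts /eqP hg].
have tsR t : t \in ts -> t \in G /\ is_reflection (rG t).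
  by move=> /hts; rewrite inE => /andP[-> ->].
have tsG : all (fun t => t \in G) ts by apply/allP => t /tsR[].
set Ms := map rG ts.
have hprod : rG g = lprod Ms by rewrite hg rG_prod.
have tsS t : t \in ts -> t \in stab rG X by move=> ht; rewrite -hgen mem_gen // inE.
have gS : g \in stab rG X.
  by rewrite -hgen hg big_seq; apply: group_prod => t ht; rewrite mem_gen // inE.
set K := lcap Ms.
have Hgrp : group_set [set w in G | K *m (rG w - 1%:M) == 0].
  apply/group_setP; split; first by rewrite inE group1 repr_mx1 subrr mulmx0 eqxx.
  move=> x y; rewrite !inE => /andP[xG /eqP hx] /andP[yG /eqP hy].
  rewrite groupM //= repr_mxM // !mulmxBr !mulmx1 mulmxA.
  move: hx hy; rewrite !mulmxBr !mulmx1 => /eqP; rewrite subr_eq0 => /eqP ->.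
  by move=> ->.
have KS w : w \in stab rG X -> (K <= fixmx (rG w))%MS.
  rewrite -hgen => hw.
  have : w \in Group Hgrp.
    apply: (subsetP _ w hw); rewrite gen_subG; apply/subsetP => t.
    rewrite inE => ht; rewrite inE (proj1 (tsR t ht)) /=.
    rewrite -sub_kermx; apply: lcap_sub; exact: map_f.
  by rewrite inE => /andP[_]; rewrite /fixmx sub_kermx.
have h1 : (fixG rG (stab rG X) <= K)%MS.
  apply: sub_lcap => M /mapP[t ht ->]; rewrite /fixG.
  exact: (bigcapmx_inf t) (tsS t ht) (submx_refl _).
have h2 : (K <= fixG rG (stab rG X))%MS by apply/sub_bigcapmxP => w; exact: KS.
have rK : \rank K = (n - size ts)%N.
  have e : \rank K = \rank (fixG rG (stab rG X)) by apply/eqP; rewrite eqn_leq !mxrankS.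
  by rewrite hsize /grank -e subKn // rank_leq_col.
have hall1 : all (fun M => (\rank (M - 1%:M)%R <= 1)%N) Ms.
  apply/allP => M /mapP[t ht ->]; have [_ /andP[_ /eqP]] := tsR t ht.
  rewrite /fixmx mxrank_ker => e; exact: natl4 e (rank_leq_col (rG t - 1%:M)).
have hallu : all (@unitary n) Ms.
  by apply/allP => M /mapP[t ht ->]; have [_ /andP[]] := tsR t ht.
have rS : \rank (lsum Ms) = size Ms.
  have := rank_lsum hall1; have := rank_lsum_ge hallu; rewrite rK size_map.
  have : (size ts <= n)%N by rewrite hsize /grank leq_subr.
  move=> a b c; exact: natl5 a b c.
have Zsub : (fixmx (rG g) <= K)%MS.
  apply: sub_lcap => M hM; rewrite {2}/fixmx sub_kermx; apply/eqP.
  apply: (main_list hall1 rS _ hM); rewrite -hprod.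
  by apply/eqP; rewrite -fixP submx_refl.
have KX : (K <= X)%MS.
  move: (hX) => /andP[hX1 hX2]; apply: submx_trans hX2; apply/sub_bigcapmxP => t htT.
  apply: KS; move: (subsetP hT t htT); rewrite !inE => /andP[-> _] /=.
  exact: submx_trans hX1 (bigcapmx_inf t htT (submx_refl _)).
have XZ : (X <= fixmx (rG g))%MS by move: gS; rewrite inE => /andP[].
have eqXZ : (X == fixmx (rG g))%MS by rewrite XZ (submx_trans Zsub KX).
split => //; split.
  move=> w; split.
    move=> hw P [A hA] hgP; apply/hA; move: (hw); rewrite inE => /andP[wG hwX].
    split => // v hv; apply/eqP; rewrite -fixP.
    have := (proj2 (proj1 (hA g) hgP)) v hv => /eqP; rewrite -fixP => hvg.
    exact: submx_trans (submx_trans hvg (submx_trans Zsub KX)) hwX.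
  move=> H; apply: H gS; exists (fun v => (v <= X)%MS) => w'; split.
    rewrite inE => /andP[wG hw]; split => // v hv; apply/eqP; rewrite -fixP.
    exact: submx_trans hv hw.
  move=> [wG hv]; rewrite inE wG /=; apply/row_subP => i; rewrite fixP.
  by rewrite hv // row_sub.
have rZ : \rank (fixmx (rG g)) = (n - size ts)%N.
  by rewrite -rK; apply/eqP; rewrite eqn_leq !mxrankS // (submx_trans KX XZ).
have -> : (n - \rank (fixmx (rG g)))%N = size ts.
  by rewrite rZ subKn // hsize /grank leq_subr.
exact: hlen.
Qed.
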